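(* Let $m$ and $n$ be positive integers, let $x$ be a real number, and put $\lambda=n(n+2x+1)$. Then \[ \sum_{i=1}^n (x+i)^{2m-1}=\sum_{k=1}^m F^{(m)}_k(x)\,\lambda^k, \] where, for $1\le k\le m$, \[ F^{(m)}_k(x)=\frac{1}{2m}\sum_{i=k}^m \binom{2m}{2i}\binom{i}{k}\left(x+\frac12\right)^{2i-2k} B_{2m-2i}\!\left(\frac12\right). \]
   Context: The Bernoulli polynomials $B_n(x)$ are defined by the generating function $\sum_{n\ge 0} B_n(x)\frac{t^n}{n!}=\frac{t e^{xt}}{e^t-1}$. *)

(* Defs.v *)
From mathcomp Require Import all_boot all_order all_algebra.
From mathcomp Require Import reals.
Set Implicit Arguments. Unset Strict Implicit. Unset Printing Implicit Defensive.
Import Order.TTheory GRing.Theory Num.Theory.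
Local Open Scope ring_scope.

(* The generating function identity
     sum_{n>=0} B_n(x) t^n/n! = t e^{xt} / (e^t - 1)
   is stated as the formal power series identity
     (sum_n B_n(x) t^n/n!) * (e^t - 1) = t e^{xt},
   i.e. coefficientwise: for every N,
     sum_{k<N} B_k(x) / (k! (N-k)!) = [N >= 1] x^(N-1)/(N-1)!.
   This determines B uniquely. *)
Definition bernoulli_gf (R : fieldType) (B : nat -> R -> R) : Prop :=
  forall (x : R) (N : nat),
    \sum_(k < N) B k x / ((k`!)%:R * ((N - k)`!)%:R)
    = if N is N'.+1 then x ^+ N' / (N'`!)%:R else 0.

Definition Fmk (R : fieldType) (B : nat -> R -> R) (m k : nat) (x : R) : R :=
  ((2 * m)%:R)^-1 *
  \sum_(k <= i < m.+1)
     ('C(2 * m, 2 * i))%:R * ('C(i, k))%:R * (x + 2^-1) ^+ (2 * i - 2 * k)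
     * B (2 * m - 2 * i)%N 2^-1.

(* Main.v *)
Require Import Defs.
From mathcomp Require Import all_boot all_order all_algebra.
From mathcomp Require Import reals.
From mathcomp Require Import ring lra zify.
Import Order.TTheory GRing.Theory Num.Theory.
Set Implicit Arguments. Unset Strict Implicit. Unset Printing Implicit Defensive.
Local Open Scope ring_scope.

Definition conv (R : realType) (a b : nat -> R) (N : nat) : R :=
  \sum_(k < N.+1) a k * b (N - k)%N.
Definition Pn (R : realType) (M : nat) (a : nat -> R) : {poly R} := \poly_(i < M) a i.

Lemma conv_poly (R : realType) (a b : nat -> R) M N : (N < M)%N ->
  conv a b N = (Pn M a * Pn M b)`_N.
Proof.
move=> hN; rewrite coefM /conv; apply: eq_bigr => i _; rewrite !coef_poly.
have hi := ltn_ord i.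
have h1 : (i < M)%N by rewrite (leq_ltn_trans _ hN) // -ltnS.
have h2 : (N - i < M)%N by rewrite (leq_ltn_trans (leq_subr _ _) hN).
by rewrite h1 h2.
Qed.

Lemma trunc_mul (R : realType) (p q : {poly R}) M N : (N < M)%N ->
  (Pn M (fun i => p`_i) * q)`_N = (p * q)`_N.
Proof.
move=> hN; rewrite !coefM; apply: eq_bigr => i _; rewrite coef_poly.
have hi := ltn_ord i.
by rewrite (leq_ltn_trans _ hN) // -ltnS.
Qed.

Lemma conv_ext (R : realType) (a a' b b' : nat -> R) N :
  (forall k, a k = a' k) -> (forall k, b k = b' k) -> conv a b N = conv a' b' N.
Proof. by move=> ha hb; apply: eq_bigr => i _; rewrite ha hb. Qed.

Lemma conv_comm (R : realType) (a b : nat -> R) N : conv a b N = conv b a N.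
Proof. by rewrite !(@conv_poly _ _ _ N.+1) // mulrC. Qed.

Lemma conv_assoc (R : realType) (a b c : nat -> R) N :
  conv (conv a b) c N = conv a (conv b c) N.
Proof.
rewrite [RHS]conv_comm !(@conv_poly _ _ _ N.+1) //.
have -> : Pn N.+1 (conv a b) = Pn N.+1 (fun i => (Pn N.+1 a * Pn N.+1 b)`_i).
  apply/polyP => i; rewrite !coef_poly; case: ifP => // hi.
  exact: conv_poly.
have -> : Pn N.+1 (conv b c) = Pn N.+1 (fun i => (Pn N.+1 b * Pn N.+1 c)`_i).
  apply/polyP => i; rewrite !coef_poly; case: ifP => // hi.
  exact: conv_poly.
rewrite (@trunc_mul _ (Pn N.+1 a * Pn N.+1 b)) //.
by rewrite (@trunc_mul _ (Pn N.+1 b * Pn N.+1 c)) // -mulrA mulrC.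
Qed.

Lemma conv_addl (R : realType) (a b c : nat -> R) N :
  conv (fun k => a k + b k) c N = conv a c N + conv b c N.
Proof. by rewrite /conv -big_split; apply: eq_bigr => i _; rewrite mulrDl. Qed.

Lemma conv_oppl (R : realType) (a c : nat -> R) N :
  conv (fun k => - a k) c N = - conv a c N.
Proof. by rewrite /conv -sumrN; apply: eq_bigr => i _; rewrite mulNr. Qed.

Lemma conv_addr (R : realType) (a b c : nat -> R) N :
  conv c (fun k => a k + b k) N = conv c a N + conv c b N.
Proof. by rewrite conv_comm conv_addl !(conv_comm c). Qed.

Lemma conv_oppr (R : realType) (a c : nat -> R) N :
  conv c (fun k => - a k) N = - conv c a N.
Proof. by rewrite conv_comm conv_oppl !(conv_comm c). Qed.

Definition d0 (R : realType) (k : nat) : R := (k == 0)%N%:R.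

Lemma conv_d0l (R : realType) (b : nat -> R) N : conv (@d0 R) b N = b N.
Proof.
rewrite /conv big_ord_recl /d0 /= mul1r subn0 big1 ?addr0 // => i _.
by rewrite mul0r.
Qed.

Lemma conv_d0r (R : realType) (b : nat -> R) N : conv b (@d0 R) N = b N.
Proof. by rewrite conv_comm conv_d0l. Qed.

Lemma fact_neq0 (R : realType) n : ((n`!)%:R : R) != 0.
Proof. by rewrite pnatr_eq0 -lt0n fact_gt0. Qed.

Lemma binR (R : realType) n k : (k <= n)%N ->
  ('C(n, k))%:R = (n`!)%:R / ((k`!)%:R * ((n - k)`!)%:R) :> R.
Proof.
move=> hk; rewrite -(bin_fact hk) natrM natrM.
have h1 := fact_neq0 R k; have h2 := fact_neq0 R (n - k).
by field; rewrite h1 h2.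
Qed.

Definition ee (R : realType) (k : nat) : R := if k is 0 then 0 else ((k`!)%:R)^-1.
Definition ex (R : realType) (h : R) (k : nat) : R := h ^+ k / (k`!)%:R.
Definition te (R : realType) (y : R) (k : nat) : R :=
  if k is k'.+1 then y ^+ k' / (k'`!)%:R else 0.
Definition gg (R : realType) (B : nat -> R -> R) (x : R) (k : nat) : R :=
  B k x / (k`!)%:R.
Definition negs (R : realType) (a : nat -> R) (k : nat) : R := (-1) ^+ k * a k.

Lemma conv_ex (R : realType) (a b : R) N : conv (ex a) (ex b) N = ex (a + b) N.
Proof.
rewrite /conv /ex addrC exprDn mulr_suml; apply: eq_bigr => i _.
have hi : (i <= N)%N by rewrite -ltnS.
rewrite -[_ *+ 'C(_, _)]mulr_natr binR //.
have h1 := fact_neq0 R i; have h2 := fact_neq0 R (N - i); have h3 := fact_neq0 R N.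
by field; rewrite h1 h2 h3.
Qed.

Lemma conv_te (R : realType) (a b : R) N : conv (te a) (ex b) N = te (a + b) N.
Proof.
case: N => [|N]; first by rewrite /conv big_ord1 /= mul0r.
transitivity (conv (ex a) (ex b) N); last by rewrite conv_ex.
rewrite /conv big_ord_recl /= mul0r add0r.
by apply: eq_bigr => i _; rewrite subSS.
Qed.

Lemma gg_conv (R : realType) (B : nat -> R -> R) (hB : bernoulli_gf B) x N :
  conv (gg B x) (@ee R) N = te x N.
Proof.
rewrite /conv big_ord_recr /= subnn /ee mulr0 addr0.
rewrite /te -(hB x N); apply: eq_bigr => i _.
have : (0 < N - i)%N by rewrite subn_gt0.
case: (N - i)%N => // j _.
by rewrite /gg invfM mulrA.
Qed.

Lemma conv_ee_split (R : realType) (a : nat -> R) N :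
  conv a (@ee R) N.+1 = \sum_(k < N) a k * @ee R (N.+1 - k)%N + a N.
Proof.
rewrite /conv big_ord_recr /= subnn /ee mulr0 addr0 big_ord_recr /=.
by rewrite subSn // subnn /= invr1 mulr1.
Qed.

Lemma conv_uniq (R : realType) (a b : nat -> R) :
  (forall N, conv a (@ee R) N = conv b (@ee R) N) -> forall N, a N = b N.
Proof.
move=> h.
suff H : forall N k, (k < N)%N -> a k = b k by move=> N; apply: (H N.+1).
elim=> [|N IH] k //; rewrite ltnS leq_eqVlt => /orP [/eqP -> | /IH //].
have := h N.+1; rewrite !conv_ee_split.
have -> : \sum_(k < N) a k * @ee R (N.+1 - k)%N = \sum_(k < N) b k * @ee R (N.+1 - k)%N.
  by apply: eq_bigr => i _; rewrite IH.
by move/addrI.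
Qed.

Lemma conv_negs (R : realType) (a b : nat -> R) N :
  conv (negs a) (negs b) N = negs (conv a b) N.
Proof.
rewrite /conv /negs mulr_sumr; apply: eq_bigr => i _.
have hi : (i <= N)%N by rewrite -ltnS.
by rewrite mulrCA !mulrA -exprD subnK.
Qed.

Lemma gg_transl (R : realType) (B : nat -> R -> R) (hB : bernoulli_gf B) x h N :
  gg B (x + h) N = conv (gg B x) (ex h) N.
Proof.
apply: conv_uniq => {}N.
rewrite gg_conv // conv_assoc.
rewrite (@conv_ext _ _ (gg B x) _ (conv (@ee R) (ex h))) //; last by move=> k; rewrite conv_comm.
by rewrite -conv_assoc (@conv_ext _ _ (te x) _ (ex h)) ?conv_te // => k; rewrite gg_conv.
Qed.

Lemma gg_sym (R : realType) (B : nat -> R -> R) (hB : bernoulli_gf B) x N :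
  negs (gg B (1 - x)) N = gg B x N.
Proof.
apply: conv_uniq => {}N; rewrite gg_conv //.
set H := negs (gg B (1 - x)).
have e1 : forall k, negs (@ee R) k = ex (-1) k - d0 R k.
  case=> [|k]; rewrite /negs /ex /d0 /ee /=; first by rewrite expr0 mulr0 fact0 divr1 subrr.
  by rewrite mulr0n subr0.
have e2 : forall k, negs (te (1 - x)) k = - te (x - 1) k.
  case=> [|k]; rewrite /negs /te ?mulr0 ?oppr0 // exprS.
  rewrite -(opprB x 1) (exprNn (x - 1)).
  have hs : (-1) ^+ k * (-1) ^+ k = 1 :> R by rewrite -exprMn mulrNN mulr1 expr1n.
  transitivity (-1 * ((-1) ^+ k * (-1) ^+ k) * ((x - 1) ^+ k / (k`!)%:R)); first by ring.
  by rewrite hs; ring.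
have e3 : forall k, conv (negs (@ee R)) (ex 1) k = - @ee R k.
  move=> k; rewrite (@conv_ext _ _ (fun k => ex (-1) k + - d0 R k) _ (ex 1)) //.
  rewrite conv_addl conv_oppl conv_d0l conv_ex addNr /ex /ee.
  case: k => [|k]; first by rewrite !expr0 fact0 divr1 subrr oppr0.
  by rewrite expr0n expr1n /= mul0r add0r mul1r.
have : conv (conv H (negs (@ee R))) (ex 1) N = - te x N.
  rewrite (@conv_ext _ _ (fun k => - te (x - 1) k) (ex 1) (ex 1)) //.
    by rewrite conv_oppl conv_te subrK.
  by move=> k; rewrite /H conv_negs /negs gg_conv // -e2.
rewrite conv_assoc (@conv_ext _ H H _ (fun k => - @ee R k)) // conv_oppr.
by move/eqP; rewrite eqr_opp => /eqP.
Qed.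

Lemma B_transl (R : realType) (B : nat -> R -> R) (hB : bernoulli_gf B) x h n :
  B n (x + h) = \sum_(k < n.+1) ('C(n, k))%:R * B k x * h ^+ (n - k).
Proof.
have := gg_transl hB x h n; rewrite /gg /conv /ex => E.
have hn := fact_neq0 R n.
transitivity (B n (x + h) / (n`!)%:R * (n`!)%:R); first by field.
rewrite E mulr_suml; apply: eq_bigr => i _.
have hi : (i <= n)%N by rewrite -ltnS.
rewrite binR //.
have h1 := fact_neq0 R i; have h2 := fact_neq0 R (n - i).
by field; rewrite h1 h2.
Qed.

Lemma B_diff (R : realType) (B : nat -> R -> R) (hB : bernoulli_gf B) x n :
  B n.+1 (x + 1) - B n.+1 x = (n.+1)%:R * x ^+ n.
Proof.
have := gg_transl hB x 1 n.+1.
rewrite (@conv_ext _ _ (gg B x) _ (fun k => @ee R k + d0 R k)) //; last first.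
  case=> [|k]; rewrite /ex /ee /d0 /= ?expr0 ?fact0 ?divr1 ?add0r //.
  by rewrite expr1n mul1r addr0.
rewrite conv_addr conv_d0r gg_conv // /gg /te factS natrM => E.
have h1 := fact_neq0 R n; have h2 : 1 + n%:R != 0 :> R by rewrite addrC natr1 pnatr_eq0.
have E2 : B n.+1 (x + 1) = (x ^+ n / (n`!)%:R + B n.+1 x / ((n.+1)%:R * (n`!)%:R))
   * ((n.+1)%:R * (n`!)%:R).
  by rewrite -E; field; rewrite h1 h2.
by rewrite E2; field; rewrite h1 h2.
Qed.

Lemma B_half_odd (R : realType) (B : nat -> R -> R) (hB : bernoulli_gf B) k :
  B (2 * k).+1 2^-1 = 0.
Proof.
have := gg_sym hB 2^-1 (2 * k).+1.
have -> : 1 - 2^-1 = 2^-1 :> R.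
  have h2 : 2 != 0 :> R by rewrite pnatr_eq0.
  by field.
rewrite /negs /gg -signr_odd /= oddM andFb expr1.
set z := B _ _ / _ => hz.
have z0 : z = 0 by lra.
have h1 := fact_neq0 R (2 * k).+1.
move: z0; rewrite /z => /eqP; rewrite mulf_eq0 invr_eq0 (negbTE h1) orbF.
by move/eqP.
Qed.

Lemma sum_evod (R : realType) (F : nat -> R) m :
  \sum_(j < (2 * m).+1) F j = \sum_(i < m.+1) F (2 * i)%N + \sum_(i < m) F (2 * i).+1.
Proof.
elim: m => [|m IH]; first by rewrite !big_ord1 big_ord0 addr0.
have -> : (2 * m.+1).+1 = (2 * m).+3 by lia.
rewrite !big_ord_recr /=.
move: IH; rewrite !big_ord_recr /= => IH.
have -> : (2 * m.+1)%N = (2 * m).+2 by lia.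
lra.
Qed.

Definition EE (R : realType) (B : nat -> R -> R) m (z : R) : R :=
  \sum_(i < m.+1) ('C(2 * m, 2 * i))%:R * B (2 * m - 2 * i)%N 2^-1 * z ^+ (2 * i).

Lemma B_EE (R : realType) (B : nat -> R -> R) (hB : bernoulli_gf B) m z :
  B (2 * m)%N (2^-1 + z) = EE B m z.
Proof.
rewrite B_transl // (reindex_inj rev_ord_inj) /=.
rewrite (eq_bigr (fun k : 'I_(2 * m).+1 =>
   ('C(2 * m, k))%:R * B (2 * m - k)%N 2^-1 * z ^+ k)); last first.
  move=> k _; rewrite subSS.
  have hk : (k <= 2 * m)%N by rewrite -ltnS.
  by rewrite bin_sub ?leq_subr // subKn.
rewrite (sum_evod (fun k => ('C(2 * m, k))%:R * B (2 * m - k)%N 2^-1 * z ^+ k)).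
rewrite [X in _ + X]big1 ?addr0 // => i _.
have hi := ltn_ord i.
have -> : (2 * m - (2 * i).+1)%N = (2 * (m - i - 1)).+1 by lia.
by rewrite B_half_odd // mulr0 mul0r.
Qed.

Definition TT (R : realType) (B : nat -> R -> R) m (y : R) k : R :=
  \sum_(i < m.+1) ('C(2 * m, 2 * i))%:R * ('C(i, k))%:R * y ^+ (2 * i - 2 * k)
     * B (2 * m - 2 * i)%N 2^-1.

Lemma EE_diff (R : realType) (B : nat -> R -> R) m (y l z : R) :
  z ^+ 2 = y ^+ 2 + l ->
  EE B m z - EE B m y = \sum_(1 <= k < m.+1) TT B m y k * l ^+ k.
Proof.
move=> hz.
have W : forall i : 'I_m.+1,
  ('C(2 * m, 2 * i))%:R * B (2 * m - 2 * i)%N 2^-1 * (y ^+ 2 + l) ^+ i =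
  \sum_(k < m.+1) ('C(2 * m, 2 * i))%:R * ('C(i, k))%:R * y ^+ (2 * i - 2 * k)
     * B (2 * m - 2 * i)%N 2^-1 * l ^+ k.
  move=> i; rewrite exprDn (big_ord_widen m.+1 (fun k => (y ^+ 2) ^+ (i - k) * l ^+ k *+ 'C(i, k))) ?ltn_ord //.
  rewrite big_mkcond mulr_sumr; apply: eq_bigr => k _; case: ifP => hk.
    rewrite -exprM mulnBr -mulr_natr; ring.
  move/negbT: hk; rewrite ltnNge negbK => hk.
  by rewrite (bin_small hk); ring.
have E1 : EE B m z = \sum_(k < m.+1) TT B m y k * l ^+ k.
  transitivity (\sum_(i < m.+1) \sum_(k < m.+1) ('C(2 * m, 2 * i))%:R * ('C(i, k))%:R
     * y ^+ (2 * i - 2 * k) * B (2 * m - 2 * i)%N 2^-1 * l ^+ k).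
    by rewrite /EE; apply: eq_bigr => i _; rewrite exprM hz; exact: W.
  rewrite exchange_big /TT; apply: eq_bigr => k _; rewrite mulr_suml.
  by apply: eq_bigr.
have E2 : EE B m y = TT B m y 0.
  by rewrite /EE /TT; apply: eq_bigr => i _; rewrite bin0 muln0 subn0; ring.
rewrite E1 E2 big_ord_recl expr0 mulr1 addrAC subrr add0r big_add1 /= big_mkord.
by apply: eq_bigr.
Qed.

Lemma Fmk_TT (R : realType) (B : nat -> R -> R) m k (x : R) : (k <= m)%N ->
  Fmk B m k x = ((2 * m)%:R)^-1 * TT B m (x + 2^-1) k.
Proof.
move=> hk; rewrite /Fmk /TT; congr (_ * _).
set F := fun i : nat => ('C(2 * m, 2 * i))%:R * ('C(i, k))%:R * (x + 2^-1) ^+ (2 * i - 2 * k)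
     * B (2 * m - 2 * i)%N 2^-1.
transitivity (\sum_(0 <= i < m.+1) F i); last by rewrite big_mkord.
rewrite [RHS](big_cat_nat (leq0n k) (leqW hk)) /=.
have -> : \sum_(0 <= i < k) F i = 0.
  rewrite big_nat_cond big1 // => i /andP[/andP[_ hi] _].
  by rewrite /F (bin_small hi); ring.
by rewrite add0r.
Qed.

Unset Implicit Arguments.

Theorem mainTheorem1 (R : realType) (B : nat -> R -> R) (hB : bernoulli_gf B)
  (m n : nat) (hm : (0 < m)%N) (hn : (0 < n)%N) (x : R) :
  let lambda := n%:R * (n%:R + 2 * x + 1) in
  \sum_(1 <= i < n.+1) (x + i%:R) ^+ (2 * m - 1)
  = \sum_(1 <= k < m.+1) Fmk B m k x * lambda ^+ k.
Proof.
move=> lambda.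
have h2 : (2 : R) != 0 by rewrite pnatr_eq0.
have [q hq] : exists q, (2 * m)%N = q.+1 by exists (2 * m - 1)%N; lia.
have hq' : (2 * m - 1)%N = q by lia.
have hp : ((2 * m)%:R : R) != 0 by rewrite pnatr_eq0; lia.
have S1 : \sum_(1 <= i < n.+1) (x + i%:R) ^+ (2 * m - 1)
    = (B (2 * m)%N (x + (n.+1)%:R) - B (2 * m)%N (x + 1%:R)) / (2 * m)%:R.
  have e : forall i, (x + i%:R) ^+ (2 * m - 1)
      = (B (2 * m)%N (x + (i.+1)%:R) - B (2 * m)%N (x + i%:R)) / (2 * m)%:R.
    move=> i; rewrite hq' -natr1 addrA hq B_diff //.
    by rewrite mulrAC divff ?mul1r // pnatr_eq0.
  rewrite (eq_bigr _ (fun i _ => e i)) -mulr_suml.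
  by rewrite (telescope_sumr (fun i => B (2 * m)%N (x + i%:R))).
rewrite S1.
have eA : x + (n.+1)%:R = 2^-1 + ((x + 2^-1) + n%:R) by rewrite -natr1; field.
have eB : x + 1%:R = 2^-1 + (x + 2^-1) by field.
rewrite eA eB !B_EE // (@EE_diff _ _ _ _ lambda); last by rewrite /lambda; field.
rewrite mulr_suml; apply: eq_big_nat => k /andP[_ hk].
by rewrite Fmk_TT // mulrC mulrA.
Qed.
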